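(* Let $\nabla$ be a Type $\mathcal A$ connection on $\mathbb R^2$ whose Ricci tensor is non-degenerate, and let $U\subset\mathbb R^2$ be a connected open set. Then the affine Killing vector fields of $\nabla$ on $U$ are exactly the vector fields $b^1\partial_{x^1}+b^2\partial_{x^2}$ with $b^1,b^2\in\mathbb R$ constant.
   Context: A torsion-free connection has Christoffel symbols $\nabla_{\partial_{x^i}}\partial_{x^j}=\Gamma_{ij}^k\partial_{x^k}$; curvature $R(X,Y)Z=\nabla_X\nabla_YZ-\nabla_Y\nabla_XZ-\nabla_{[X,Y]}Z$, Ricci tensor $\rho(Y,Z)=\mathrm{Tr}(X\mapsto R(X,Y)Z)$. For real constants, $\Gamma(a,b,c,d,e,f)$ denotes the connection on $\mathbb R^2$ with constant Christoffel symbols $\Gamma_{11}^1=a$, $\Gamma_{11}^2=b$, $\Gamma_{12}^1=\Gamma_{21}^1=c$, $\Gamma_{12}^2=\Gamma_{21}^2=d$, $\Gamma_{22}^1=e$, $\Gamma_{22}^2=f$; these are the Type $\mathcal A$ connections. A vector field $X$ on $U$ is an affine Killing vector field if $\mathcal L_X\nabla=0$, i.e. $[X,\nabla_YZ]-\nabla_Y[X,Z]-\nabla_{[X,Y]}Z=0$ for all vector fields $Y,Z$ on $U$. *)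

(* Defs.v *)
From Stdlib Require Import Reals List ClassicalEpsilon.
Open Scope R_scope.

Inductive idx : Type := i1 | i2.

Definition idx_eqb (i j : idx) : bool :=
  match i, j with i1, i1 | i2, i2 => true | _, _ => false end.

Definition sum2 (g : idx -> R) : R := g i1 + g i2.

Definition pt := (R * R)%type.

Definition shift (p : pt) (d : idx) (t : R) : pt :=
  match d with
  | i1 => (fst p + t, snd p)
  | i2 => (fst p, snd p + t)
  end.

(* partial derivative d/dx^d of f at p (value 0 if it does not exist) *)
Definition pd (d : idx) (f : pt -> R) (p : pt) : R :=
  epsilon (inhabits 0) (fun l => derivable_pt_lim (fun t => f (shift p d t)) 0 l).

Definition is_open (U : pt -> Prop) : Prop :=
  forall p, U p -> exists eps, 0 < eps /\
    forall q, Rabs (fst q - fst p) < eps -> Rabs (snd q - snd p) < eps -> U q.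

Definition is_connected (U : pt -> Prop) : Prop :=
  forall V W : pt -> Prop, is_open V -> is_open W ->
    (forall p, U p -> V p \/ W p) ->
    (forall p, U p -> V p -> W p -> False) ->
    (exists p, U p /\ V p) -> (exists p, U p /\ W p) -> False.

(* f is C^infinity on U: F ds is the iterated partial derivative along the list ds
   (innermost derivative last), all of them existing and continuous on U. *)
Definition smooth_on (U : pt -> Prop) (f : pt -> R) : Prop :=
  exists F : list idx -> pt -> R,
    (forall p, U p -> F nil p = f p) /\
    (forall ds d p, U p ->
       derivable_pt_lim (fun t => F ds (shift p d t)) 0 (F (d :: ds) p)) /\
    (forall ds p, U p -> forall eps, 0 < eps -> exists delta, 0 < delta /\
       forall q, U q -> Rabs (fst q - fst p) < delta -> Rabs (snd q - snd p) < delta ->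
         Rabs (F ds q - F ds p) < eps).

(* vector fields: X k p = k-th component X^k at p *)
Definition vf := idx -> pt -> R.

Definition smooth_vf (U : pt -> Prop) (X : vf) : Prop :=
  smooth_on U (X i1) /\ smooth_on U (X i2).

(* Christoffel symbols: Gam a b c d e f i j k = Gamma_{ij}^k *)
Definition Gam (a b c d e f : R) (i j k : idx) : R :=
  match i, j, k with
  | i1, i1, i1 => a
  | i1, i1, i2 => b
  | i1, i2, i1 | i2, i1, i1 => c
  | i1, i2, i2 | i2, i1, i2 => d
  | i2, i2, i1 => e
  | i2, i2, i2 => f
  end.

Definition nabla (G : idx -> idx -> idx -> R) (Y Z : vf) : vf :=
  fun k p => sum2 (fun i => Y i p * pd i (Z k) p)
           + sum2 (fun i => sum2 (fun j => Y i p * Z j p * G i j k)).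

Definition bracket (X Y : vf) : vf :=
  fun k p => sum2 (fun i => X i p * pd i (Y k) p - Y i p * pd i (X k) p).

Definition curv (G : idx -> idx -> idx -> R) (X Y Z : vf) : vf :=
  fun k p => nabla G X (nabla G Y Z) k p - nabla G Y (nabla G X Z) k p
             - nabla G (bracket X Y) Z k p.

Definition coord (i : idx) : vf := fun k _ => if idx_eqb i k then 1 else 0.

Definition ricci (G : idx -> idx -> idx -> R) (j k : idx) (p : pt) : R :=
  sum2 (fun i => curv G (coord i) (coord j) (coord k) i p).

Definition ricci_nondegenerate (G : idx -> idx -> idx -> R) : Prop :=
  forall p, ricci G i1 i1 p * ricci G i2 i2 p - ricci G i1 i2 p * ricci G i2 i1 p <> 0.

(* X is an affine Killing vector field on U: L_X nabla = 0 on U *)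
Definition affine_killing (G : idx -> idx -> idx -> R) (U : pt -> Prop) (X : vf) : Prop :=
  smooth_vf U X /\
  forall Y Z : vf, smooth_vf U Y -> smooth_vf U Z ->
    forall k p, U p ->
      bracket X (nabla G Y Z) k p - nabla G Y (bracket X Z) k p
      - nabla G (bracket X Y) Z k p = 0.

(* Main.v *)
From Coquelicot Require Import Coquelicot.
Require Import Defs.
From Stdlib Require Import Reals Lra List ClassicalEpsilon FunctionalExtensionality Classical.
Open Scope R_scope.

Lemma dpl_loc (f g : R -> R) x l r : 0 < r ->
  (forall t, Rabs (t - x) < r -> f t = g t) -> derivable_pt_lim g x l -> derivable_pt_lim f x l.
Proof.
  intros Hr Heq Hg eps He. destruct (Hg eps He) as [del Hd].
  assert (Hm : 0 < Rmin del r) by (apply Rmin_pos; [apply cond_pos|lra]).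
  exists (mkposreal _ Hm). intros h Hh Hlt. simpl in Hlt.
  rewrite (Heq (x+h)), (Heq x).
  - apply Hd; auto. eapply Rlt_le_trans; [exact Hlt| apply Rmin_l].
  - rewrite Rminus_diag, Rabs_R0; lra.
  - replace (x+h-x) with h by ring. eapply Rlt_le_trans; [exact Hlt| apply Rmin_r].
Qed.

Lemma dpl_transl (phi : R -> R) x l :
  derivable_pt_lim (fun s => phi (x + s)) 0 l -> derivable_pt_lim phi x l.
Proof.
  intros H eps He. destruct (H eps He) as [del Hd]. exists del. intros h Hh Hlt.
  specialize (Hd h Hh Hlt). rewrite Rplus_0_l, Rplus_0_r in Hd. exact Hd.
Qed.

Lemma dpl_eq_lim f x l l' : derivable_pt_lim f x l -> l = l' -> derivable_pt_lim f x l'.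
Proof. intros H ->; exact H. Qed.

Lemma dl_plus f g x l1 l2 : derivable_pt_lim f x l1 -> derivable_pt_lim g x l2 ->
  derivable_pt_lim (fun t => f t + g t) x (l1 + l2).
Proof. intros; now apply derivable_pt_lim_plus. Qed.
Lemma dl_minus f g x l1 l2 : derivable_pt_lim f x l1 -> derivable_pt_lim g x l2 ->
  derivable_pt_lim (fun t => f t - g t) x (l1 - l2).
Proof. intros; now apply derivable_pt_lim_minus. Qed.
Lemma dl_opp f x l1 : derivable_pt_lim f x l1 ->
  derivable_pt_lim (fun t => - f t) x (- l1).
Proof. intros; now apply derivable_pt_lim_opp. Qed.
Lemma dl_mult f g x l1 l2 : derivable_pt_lim f x l1 -> derivable_pt_lim g x l2 ->
  derivable_pt_lim (fun t => f t * g t) x (l1 * g x + f x * l2).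
Proof. intros; now apply derivable_pt_lim_mult. Qed.
Lemma dl_scal (c : R) f x l : derivable_pt_lim f x l ->
  derivable_pt_lim (fun t => c * f t) x (c * l).
Proof. intros; now apply (derivable_pt_lim_scal f c x l). Qed.
Lemma dl_const (c : R) x : derivable_pt_lim (fun _ => c) x 0.
Proof. exact (derivable_pt_lim_const c x). Qed.

Lemma shift0 p d : shift p d 0 = p.
Proof. destruct p, d; simpl; f_equal; ring. Qed.

Lemma open_shift U p d : is_open U -> U p -> exists r, 0 < r /\ forall t, Rabs t < r -> U (shift p d t).
Proof.
  intros HU Hp. destruct (HU p Hp) as [eps [He H]]. exists eps; split; auto.
  intros t Ht. destruct d; apply H; simpl.
  - replace (fst p + t - fst p) with t by ring; exact Ht.
  - rewrite Rminus_diag, Rabs_R0; lra.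
  - rewrite Rminus_diag, Rabs_R0; lra.
  - replace (snd p + t - snd p) with t by ring; exact Ht.
Qed.

Lemma pd_eq d g p l : derivable_pt_lim (fun t => g (shift p d t)) 0 l -> pd d g p = l.
Proof.
  intros H. unfold pd.
  pose proof (epsilon_spec (inhabits 0) (fun l => derivable_pt_lim (fun t => g (shift p d t)) 0 l) (ex_intro _ l H)) as H'.
  eapply uniqueness_limite; eauto.
Qed.

Lemma pd_loc U g h d p l : is_open U -> U p -> (forall q, U q -> g q = h q) ->
  derivable_pt_lim (fun t => h (shift p d t)) 0 l -> pd d g p = l.
Proof.
  intros HU Hp Heq Hh. apply pd_eq. destruct (open_shift U p d HU Hp) as [r [Hr Hs]].
  apply (dpl_loc _ (fun t => h (shift p d t)) _ _ r Hr); auto.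
  intros t Ht. apply Heq, Hs. rewrite Rminus_0_r in Ht; exact Ht.
Qed.

Lemma deriv_eq U g h d p l1 l2 : is_open U -> U p -> (forall q, U q -> g q = h q) ->
  derivable_pt_lim (fun t => g (shift p d t)) 0 l1 ->
  derivable_pt_lim (fun t => h (shift p d t)) 0 l2 -> l1 = l2.
Proof.
  intros HU Hp Heq H1 H2. rewrite <- (pd_eq d g p l1 H1). eapply pd_loc; eauto.
Qed.

Lemma pd_const d (c : R) p : pd d (fun _ => c) p = 0.
Proof. apply pd_eq. apply dl_const. Qed.

Lemma pd_coord d i k p : pd d (coord i k) p = 0.
Proof. exact (pd_const d _ p). Qed.

Definition smoothF (U : pt -> Prop) (X : vf) (FX : idx -> list idx -> pt -> R) : Prop :=
  forall k,
    (forall p, U p -> FX k nil p = X k p) /\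
    (forall ds d p, U p ->
       derivable_pt_lim (fun t => FX k ds (shift p d t)) 0 (FX k (d :: ds) p)) /\
    (forall ds p, U p -> forall eps, 0 < eps -> exists delta, 0 < delta /\
       forall q, U q -> Rabs (fst q - fst p) < delta -> Rabs (snd q - snd p) < delta ->
         Rabs (FX k ds q - FX k ds p) < eps).

Lemma smooth_vf_F U X : smooth_vf U X -> exists FX, smoothF U X FX.
Proof.
  intros [[F1 H1] [F2 H2]].
  exists (fun k => match k with i1 => F1 | i2 => F2 end).
  intros []; assumption.
Qed.

Lemma smooth_const U (c : R) : smooth_on U (fun _ => c).
Proof.
  exists (fun ds => match ds with nil => fun _ => c | _ => fun _ => 0 end).
  split; [reflexivity|split].
  - intros ds d p _. destruct ds; apply dl_const.
  - intros ds p _ eps He. exists 1. split; [lra|]. intros. destruct ds;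
    rewrite Rminus_diag, Rabs_R0; lra.
Qed.

Lemma smooth_coord U i : smooth_vf U (coord i).
Proof. split; apply smooth_const. Qed.

Definition Mop (G : idx -> idx -> idx -> R) (i : idx) (A : idx -> idx -> R) (k j : idx) : R :=
  sum2 (fun l => G i j l * A k l) - sum2 (fun m => G i m k * A m j) - sum2 (fun m => G m j k * A m i).

Lemma nabla_cc G i j k q : nabla G (coord i) (coord j) k q = G i j k.
Proof. unfold nabla, sum2. rewrite !pd_coord. unfold coord; destruct i, j; simpl; ring. Qed.

Lemma br_Xc X j m q : bracket X (coord j) m q = - pd j (X m) q.
Proof. unfold bracket, sum2. rewrite !pd_coord. unfold coord; destruct j; simpl; ring. Qed.

Section K2.
Variables (G : idx -> idx -> idx -> R) (U : pt -> Prop) (X : vf) (FX : idx -> list idx -> pt -> R).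
Hypothesis HU : is_open U.
Hypothesis HF : smoothF U X FX.

Lemma pd_X l k q : U q -> pd l (X k) q = FX k (l :: nil) q.
Proof.
  intros Hq. destruct (HF k) as [H0 [H1 _]].
  apply (pd_loc U (X k) (FX k nil)); auto.
  intros; symmetry; auto.
Qed.

Lemma pd_pdX i j k p : U p -> pd i (fun q => - pd j (X k) q) p = - FX k (i :: j :: nil) p.
Proof.
  intros Hp. destruct (HF k) as [H0 [H1 _]].
  apply (pd_loc U _ (fun q => - FX k (j :: nil) q)); auto.
  - intros q Hq; rewrite pd_X; auto.
  - apply dl_opp. auto.
Qed.

Lemma killing2 :
  (forall Y Z : vf, smooth_vf U Y -> smooth_vf U Z ->
    forall k p, U p ->
      bracket X (nabla G Y Z) k p - nabla G Y (bracket X Z) k p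
      - nabla G (bracket X Y) Z k p = 0) ->
  forall i j k p, U p -> FX k (i :: j :: nil) p = Mop G i (fun k l => FX k (l :: nil) p) k j.
Proof.
  intros HK i j k p Hp.
  pose proof (HK (coord i) (coord j) (smooth_coord U i) (smooth_coord U j) k p Hp) as H.
  assert (E1: nabla G (coord i) (coord j) = fun k _ => G i j k)
    by (extensionality k'; extensionality q; apply nabla_cc).
  assert (E2: forall j, bracket X (coord j) = fun m q => - pd j (X m) q)
    by (intro j'; extensionality k'; extensionality q; apply br_Xc).
  rewrite E1, !E2 in H. unfold bracket, nabla, sum2 in H. cbv beta in H.
  rewrite !(pd_pdX _ _ _ _ Hp) in H.
  rewrite !(pd_X _ _ _ Hp) in H.
  rewrite !pd_const, !pd_coord in H.
  unfold Mop, sum2, coord in *. destruct i, j, k; simpl in H; lra.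
Qed.
End K2.

Lemma is_derive_of_dpl (f : R -> R) x l : derivable_pt_lim f x l -> is_derive f x l.
Proof. intros H; apply is_derive_Reals; exact H. Qed.

Lemma clairaut U (H : list idx -> pt -> R) ds p : is_open U -> U p ->
  (forall ds d q, U q -> derivable_pt_lim (fun t => H ds (shift q d t)) 0 (H (d :: ds) q)) ->
  (forall ds q, U q -> forall eps, 0 < eps -> exists delta, 0 < delta /\
       forall q', U q' -> Rabs (fst q' - fst q) < delta -> Rabs (snd q' - snd q) < delta ->
         Rabs (H ds q' - H ds q) < eps) ->
  H (i1 :: i2 :: ds) p = H (i2 :: i1 :: ds) p.
Proof.
  intros HU Hp Hd Hc. destruct p as [x y].
  destruct (HU _ Hp) as [eps [He Hsq]]. simpl in Hsq.
  set (f := fun u v => H ds (u, v)).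
  assert (D2 : forall u v, U (u, v) -> Derive (fun t => f u t) v = H (i2 :: ds) (u, v)).
  { intros u v Huv. apply is_derive_unique. apply is_derive_of_dpl.
    apply dpl_transl. exact (Hd ds i2 (u, v) Huv). }
  assert (D1 : forall u v, U (u, v) -> Derive (fun t => f t v) u = H (i1 :: ds) (u, v)).
  { intros u v Huv. apply is_derive_unique. apply is_derive_of_dpl.
    apply dpl_transl. exact (Hd ds i1 (u, v) Huv). }
  assert (Hin : forall u v, Rabs (u - x) < eps -> Rabs (v - y) < eps -> U (u, v)).
  { intros u v Hu Hv. apply (Hsq (u, v)); simpl; auto. }
  assert (He2 : 0 < eps / 2) by lra.
  assert (Hhalf : forall c u z, Rabs (u - c) < eps/2 ->
                  Rabs (z - u) < eps/2 -> Rabs (z - c) < eps).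
  { intros c u z Hu Hz.
    replace (z - c) with ((z - u) + (u - c)) by ring.
    eapply Rle_lt_trans; [apply Rabs_triang|lra]. }
  assert (D12 : forall u v, Rabs (u - x) < eps/2 -> Rabs (v - y) < eps/2 ->
     is_derive (fun z => Derive (fun t => f z t) v) u (H (i1 :: i2 :: ds) (u, v))).
  { intros u v Hu Hv. apply is_derive_of_dpl.
    apply (dpl_loc _ (fun z => H (i2 :: ds) (z, v)) _ _ (eps/2) He2).
    - intros t Ht. apply D2. apply Hin; [eapply Hhalf; eauto | lra].
    - apply dpl_transl. exact (Hd (i2 :: ds) i1 (u, v) (Hin u v ltac:(lra) ltac:(lra))). }
  assert (D21 : forall u v, Rabs (u - x) < eps/2 -> Rabs (v - y) < eps/2 ->
     is_derive (fun z => Derive (fun t => f t z) u) v (H (i2 :: i1 :: ds) (u, v))).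
  { intros u v Hu Hv. apply is_derive_of_dpl.
    apply (dpl_loc _ (fun z => H (i1 :: ds) (u, z)) _ _ (eps/2) He2).
    - intros t Ht. apply D1. apply Hin; [lra | eapply Hhalf; eauto].
    - apply dpl_transl. exact (Hd (i1 :: ds) i2 (u, v) (Hin u v ltac:(lra) ltac:(lra))). }
  assert (Hxy1 : Rabs (x - x) < eps/2) by (rewrite Rminus_diag, Rabs_R0; lra).
  assert (Hyy1 : Rabs (y - y) < eps/2) by (rewrite Rminus_diag, Rabs_R0; lra).
  assert (CT : forall (F : R -> R -> R) dds,
     (forall u v, Rabs (u - x) < eps/2 -> Rabs (v - y) < eps/2 -> F u v = H dds (u, v)) ->
     continuity_2d_pt F x y).
  { intros F dds HF e.
    destruct (Hc dds (x, y) Hp e (cond_pos e)) as [del [Hdel Hcl]].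
    assert (Hm : 0 < Rmin del (eps/2)) by (apply Rmin_pos; lra).
    exists (mkposreal _ Hm). intros u v Hu Hv. simpl in Hu, Hv.
    assert (Hu1 : Rabs (u - x) < del) by (eapply Rlt_le_trans; [exact Hu|apply Rmin_l]).
    assert (Hu2 : Rabs (u - x) < eps/2) by (eapply Rlt_le_trans; [exact Hu|apply Rmin_r]).
    assert (Hv1 : Rabs (v - y) < del) by (eapply Rlt_le_trans; [exact Hv|apply Rmin_l]).
    assert (Hv2 : Rabs (v - y) < eps/2) by (eapply Rlt_le_trans; [exact Hv|apply Rmin_r]).
    rewrite (HF u v Hu2 Hv2), (HF x y Hxy1 Hyy1).
    apply (Hcl (u, v)); simpl; auto. apply Hin; lra. }
  rewrite <- (is_derive_unique _ _ _ (D12 x y Hxy1 Hyy1)).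
  rewrite <- (is_derive_unique _ _ _ (D21 x y Hxy1 Hyy1)).
  apply (Schwarz f x y).
  - exists (mkposreal _ He2). intros u v Hu Hv. simpl in Hu, Hv.
    split; [|split; [|split]].
    + eexists. apply is_derive_of_dpl. apply dpl_transl.
      exact (Hd ds i1 (u, v) (Hin u v ltac:(lra) ltac:(lra))).
    + eexists. apply is_derive_of_dpl. apply dpl_transl.
      exact (Hd ds i2 (u, v) (Hin u v ltac:(lra) ltac:(lra))).
    + eexists. apply D12; auto.
    + eexists. apply D21; auto.
  - apply (CT _ (i1 :: i2 :: ds)). intros u v Hu Hv. apply is_derive_unique. apply D12; auto.
  - apply (CT _ (i2 :: i1 :: ds)). intros u v Hu Hv. apply is_derive_unique. apply D21; auto.
Qed.

Lemma dpl_Mop G i (A : R -> idx -> idx -> R) B x :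
  (forall k j, derivable_pt_lim (fun t => A t k j) x (B k j)) ->
  forall k j, derivable_pt_lim (fun t => Mop G i (A t) k j) x (Mop G i B k j).
Proof.
  intros HA k j. unfold Mop, sum2.
  repeat first [apply dl_minus | apply dl_plus | apply dl_scal | apply HA].
Qed.

Definition Cz G (A : idx -> idx -> R) k j :=
  Mop G i2 (Mop G i1 A) k j - Mop G i1 (Mop G i2 A) k j.

Section K3.
Variables (G : idx -> idx -> idx -> R) (U : pt -> Prop) (X : vf) (FX : idx -> list idx -> pt -> R).
Hypothesis HU : is_open U.
Hypothesis HF : smoothF U X FX.
Hypothesis HK : forall Y Z : vf, smooth_vf U Y -> smooth_vf U Z ->
    forall k p, U p ->
      bracket X (nabla G Y Z) k p - nabla G Y (bracket X Z) k p
      - nabla G (bracket X Y) Z k p = 0.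

Definition Ap (p : pt) := fun k l => FX k (l :: nil) p.

Lemma der1 d k ds p : U p ->
  derivable_pt_lim (fun t => FX k ds (shift p d t)) 0 (FX k (d :: ds) p).
Proof. intros Hp; destruct (HF k) as [_ [H _]]; auto. Qed.

Lemma third d i k j p : U p ->
  FX k (d :: i :: j :: nil) p = Mop G i (Mop G d (Ap p)) k j.
Proof.
  intros Hp.
  assert (EB : (fun k' j' => FX k' (d :: j' :: nil) p) = Mop G d (Ap p)).
  { extensionality k'; extensionality j'. apply (killing2 G U X FX HU HF HK); auto. }
  rewrite <- EB.
  apply (deriv_eq U (FX k (i :: j :: nil)) (fun q => Mop G i (Ap q) k j) d p); auto.
  - intros q Hq. apply (killing2 G U X FX HU HF HK); auto.
  - apply der1; auto.
  - apply (dpl_Mop G i (fun t => Ap (shift p d t))). intros k' j'. apply der1; auto.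
Qed.

Lemma Cz0 p k j : U p -> Cz G (Ap p) k j = 0.
Proof.
  intros Hp. unfold Cz. rewrite <- third, <- third by auto.
  destruct (HF k) as [_ [H1 H2]].
  rewrite (clairaut U (FX k) (j :: nil) p HU Hp H1 H2). ring.
Qed.

Lemma CzM d p k j : U p -> Cz G (Mop G d (Ap p)) k j = 0.
Proof.
  intros Hp.
  assert (EB : (fun k' j' => FX k' (d :: j' :: nil) p) = Mop G d (Ap p)).
  { extensionality k'; extensionality j'. apply (killing2 G U X FX HU HF HK); auto. }
  rewrite <- EB.
  apply (deriv_eq U (fun q => Cz G (Ap q) k j) (fun _ => 0) d p); auto.
  - intros q Hq. apply Cz0; auto.
  - unfold Cz. apply dl_minus.
    + apply (dpl_Mop G i2 (fun t => Mop G i1 (Ap (shift p d t)))).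
      apply dpl_Mop. intros; apply der1; auto.
    + apply (dpl_Mop G i1 (fun t => Mop G i2 (Ap (shift p d t)))).
      apply dpl_Mop. intros; apply der1; auto.
  - apply dl_const.
Qed.
End K3.

Definition r11 (a b c d e f : R) := a*d + b*f - b*c - d*d.
Definition r22 (a b c d e f : R) := a*e + c*f - c*c - d*e.
Definition r12 (a b c d e f : R) := c*d - b*e.
Definition detp a b c d e f := r11 a b c d e f * r22 a b c d e f - r12 a b c d e f * r12 a b c d e f.

Definition mkA (x11 x12 x21 x22 : R) : idx -> idx -> R :=
  fun k j => match k, j with i1, i1 => x11 | i1, i2 => x12 | i2, i1 => x21 | i2, i2 => x22 end.

Lemma alg_core a b c d e f phi x11 x12 x21 x22 :
  detp a b c d e f <> 0 ->
  detp a b c d e f * x11 = - phi * r12 a b c d e f ->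
  detp a b c d e f * x12 = - phi * r22 a b c d e f ->
  detp a b c d e f * x21 = phi * r11 a b c d e f ->
  detp a b c d e f * x22 = phi * r12 a b c d e f ->
  let G := Gam a b c d e f in let A := mkA x11 x12 x21 x22 in
  Cz G (Mop G i1 A) i2 i1 = - 6 * b * phi /\
  Cz G (Mop G i1 A) i2 i2 = - phi * (4 * d - 2 * a) /\
  Cz G (Mop G i1 A) i1 i2 = phi * (2 * f - 4 * c) /\
  Cz G (Mop G i2 A) i1 i2 = - 6 * e * phi.
Proof.
  intros Hd E11 E12 E21 E22.
  assert (x11 = - phi * r12 a b c d e f / detp a b c d e f) by (apply (Rmult_eq_reg_l (detp a b c d e f)); [rewrite E11; field; auto | auto]).
  assert (x12 = - phi * r22 a b c d e f / detp a b c d e f) by (apply (Rmult_eq_reg_l (detp a b c d e f)); [rewrite E12; field; auto | auto]).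
  assert (x21 = phi * r11 a b c d e f / detp a b c d e f) by (apply (Rmult_eq_reg_l (detp a b c d e f)); [rewrite E21; field; auto | auto]).
  assert (x22 = phi * r12 a b c d e f / detp a b c d e f) by (apply (Rmult_eq_reg_l (detp a b c d e f)); [rewrite E22; field; auto | auto]).
  subst x11 x12 x21 x22. intros G A. subst G A.
  unfold detp in *. unfold Cz, Mop, sum2, Gam, mkA. simpl.
  unfold r11, r12, r22 in *.
  repeat split; field; exact Hd.
Qed.

Lemma alg a b c d e f x11 x12 x21 x22 :
  detp a b c d e f <> 0 ->
  let G := Gam a b c d e f in let A := mkA x11 x12 x21 x22 in
  (forall k j, Cz G A k j = 0) ->
  (forall k j, Cz G (Mop G i1 A) k j = 0) ->
  (forall k j, Cz G (Mop G i2 A) k j = 0) ->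
  x11 = 0 /\ x12 = 0 /\ x21 = 0 /\ x22 = 0.
Proof.
  intros Hd G A H0 H1 H2.
  set (phi := x11 * r12 a b c d e f + x21 * r22 a b c d e f).
  assert (E11 : detp a b c d e f * x11 = Cz G A i2 i1 / 2 * r22 a b c d e f - phi * r12 a b c d e f)
    by (unfold phi, detp, r11, r12, r22, Cz, Mop, sum2, G, Gam, A, mkA; simpl; field).
  assert (E21 : detp a b c d e f * x21 = - Cz G A i2 i1 / 2 * r12 a b c d e f + phi * r11 a b c d e f)
    by (unfold phi, detp, r11, r12, r22, Cz, Mop, sum2, G, Gam, A, mkA; simpl; field).
  assert (E12 : detp a b c d e f * x12 = (Cz G A i2 i2 - phi) * r22 a b c d e f + Cz G A i1 i2 / 2 * r12 a b c d e f)
    by (unfold phi, detp, r11, r12, r22, Cz, Mop, sum2, G, Gam, A, mkA; simpl; field).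
  assert (E22 : detp a b c d e f * x22 = - (Cz G A i2 i2 - phi) * r12 a b c d e f - Cz G A i1 i2 / 2 * r11 a b c d e f)
    by (unfold phi, detp, r11, r12, r22, Cz, Mop, sum2, G, Gam, A, mkA; simpl; field).
  rewrite (H0 i1 i2), (H0 i2 i2), (H0 i2 i1) in *.
  assert (E11' : detp a b c d e f * x11 = - phi * r12 a b c d e f) by (rewrite E11; field).
  assert (E12' : detp a b c d e f * x12 = - phi * r22 a b c d e f).
  { rewrite E12. field. }
  assert (E21' : detp a b c d e f * x21 = phi * r11 a b c d e f) by (rewrite E21; field).
  assert (E22' : detp a b c d e f * x22 = phi * r12 a b c d e f) by (rewrite E22; field).
  pose proof (alg_core a b c d e f phi x11 x12 x21 x22 Hd E11' E12' E21' E22') as HC.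
  cbv zeta in HC. destruct HC as [F1 [F2 [F3 F4]]].
  fold G A in F1, F2, F3, F4.
  rewrite H1 in F1, F2, F3. rewrite H2 in F4.
  assert (Hphi : phi = 0).
  { destruct (Req_dec phi 0) as [|Hn]; auto. exfalso.
    assert (b = 0) by nra. assert (e = 0) by nra.
    assert (a = 2 * d) by nra. assert (f = 2 * c) by nra.
    subst. apply Hd. unfold detp, r11, r12, r22. ring. }
  rewrite Hphi in E11, E21, E12, E22.
  repeat split; apply (Rmult_eq_reg_l (detp a b c d e f)); auto; lra.
Qed.

Lemma br_cc i j : bracket (coord i) (coord j) = fun _ _ => 0.
Proof.
  extensionality k; extensionality q. unfold bracket, sum2. rewrite !pd_coord. ring.
Qed.

Lemma ricci_det a b c d e f p :
  let G := Gam a b c d e f in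
  ricci G i1 i1 p * ricci G i2 i2 p - ricci G i1 i2 p * ricci G i2 i1 p = detp a b c d e f.
Proof.
  intros G.
  assert (E : forall i j, nabla G (coord i) (coord j) = fun k _ => G i j k)
    by (intros; extensionality k'; extensionality q; apply nabla_cc).
  unfold ricci, curv, sum2 at 1 2 3 4. cbv beta. rewrite !E, !br_cc. unfold nabla, sum2. cbv beta.
  rewrite !pd_const, !pd_coord. unfold G, coord, Gam, detp, r11, r12, r22. simpl. ring.
Qed.

Lemma line_const (phi : R -> R) h :
  (forall t, Rabs t <= Rabs h -> derivable_pt_lim phi t 0) -> phi h = phi 0.
Proof.
  intros H. destruct (Rtotal_order h 0) as [Hl|[He|Hg]].
  - apply eq_is_derive; [|lra]. intros t Ht. apply is_derive_Reals. apply H.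
    rewrite !Rabs_left1; lra.
  - subst; reflexivity.
  - symmetry. apply eq_is_derive; [|lra]. intros t Ht. apply is_derive_Reals. apply H.
    rewrite !Rabs_pos_eq; lra.
Qed.

Lemma loc_const (U : pt -> Prop) (g : pt -> R) : is_open U ->
  (forall q d, U q -> derivable_pt_lim (fun t => g (shift q d t)) 0 0) ->
  forall p, U p -> exists r, 0 < r /\ forall q, Rabs (fst q - fst p) < r ->
     Rabs (snd q - snd p) < r -> U q /\ g q = g p.
Proof.
  intros HU Hd p Hp. destruct (HU p Hp) as [eps [He Hsq]]. exists eps. split; auto.
  intros q H1 H2. split; [apply Hsq; auto|].
  destruct p as [x y], q as [u v]. simpl in *.
  assert (A1 : g (u, y) = g (x, y)).
  { pose proof (line_const (fun t => g (x + t, y)) (u - x)) as L. simpl in L.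
    replace (x + (u - x)) with u in L by ring. rewrite Rplus_0_r in L. apply L.
    intros t Ht. apply dpl_transl.
    assert (Ef : (fun s => g (x + (t + s), y)) = (fun s => g (shift (x + t, y) i1 s))).
    { extensionality s. simpl. rewrite Rplus_assoc. reflexivity. }
    rewrite Ef. apply Hd. apply Hsq; simpl.
    - replace (x + t - x) with t by ring. lra.
    - rewrite Rminus_diag, Rabs_R0; lra. }
  assert (A2 : g (u, v) = g (u, y)).
  { pose proof (line_const (fun t => g (u, y + t)) (v - y)) as L. simpl in L.
    replace (y + (v - y)) with v in L by ring. rewrite Rplus_0_r in L. apply L.
    intros t Ht. apply dpl_transl.
    assert (Ef : (fun s => g (u, y + (t + s))) = (fun s => g (shift (u, y + t) i2 s))).
    { extensionality s. simpl. rewrite Rplus_assoc. reflexivity. }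
    rewrite Ef. apply Hd. apply Hsq; simpl.
    - lra.
    - replace (y + t - y) with t by ring. lra. }
  congruence.
Qed.

Lemma const_conn (U : pt -> Prop) (g : pt -> R) : is_open U -> Defs.is_connected U ->
  (forall q d, U q -> derivable_pt_lim (fun t => g (shift q d t)) 0 0) ->
  exists c, forall q, U q -> g q = c.
Proof.
  intros HU HC Hd.
  destruct (classic (exists p, U p)) as [[p0 Hp0]|Hn].
  - exists (g p0). intros q Hq. apply NNPP; intro Hne.
    apply (HC (fun q => U q /\ g q = g p0) (fun q => U q /\ g q <> g p0)).
    + intros p [Hp Heq]. destruct (loc_const U g HU Hd p Hp) as [r [Hr H]].
      exists r; split; auto. intros q' h1 h2. destruct (H q' h1 h2). split; auto. congruence.
    + intros p [Hp Heq]. destruct (loc_const U g HU Hd p Hp) as [r [Hr H]].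
      exists r; split; auto. intros q' h1 h2. destruct (H q' h1 h2). split; auto. congruence.
    + intros p Hp. destruct (Req_dec (g p) (g p0)); [left|right]; split; auto.
    + intros p Hp [_ E] [_ E']. auto.
    + exists p0; auto.
    + exists q; auto.
  - exists 0. intros q Hq. exfalso. apply Hn; eauto.
Qed.

Section Rev.
Variables (G : idx -> idx -> idx -> R) (U : pt -> Prop) (X Y Z : vf)
  (FY FZ : idx -> list idx -> pt -> R) (p : pt).
Hypothesis HU : is_open U.
Hypothesis HFY : smoothF U Y FY.
Hypothesis HFZ : smoothF U Z FZ.
Hypothesis Hp : U p.
Hypothesis XB : forall l q, U q -> X l q = X l p.

Lemma pdXz l m q : U q -> pd l (X m) q = 0.
Proof.
  intros Hq. apply (pd_loc U (X m) (fun _ => X m p)); auto. apply dl_const.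
Qed.

Lemma YF m q : U q -> Y m q = FY m nil q.
Proof. intros Hq; destruct (HFY m) as [H _]; symmetry; auto. Qed.
Lemma ZF m q : U q -> Z m q = FZ m nil q.
Proof. intros Hq; destruct (HFZ m) as [H _]; symmetry; auto. Qed.
Lemma dY m ds d : derivable_pt_lim (fun t => FY m ds (shift p d t)) 0 (FY m (d :: ds) p).
Proof. destruct (HFY m) as [_ [H _]]; auto. Qed.
Lemma dZ m ds d : derivable_pt_lim (fun t => FZ m ds (shift p d t)) 0 (FZ m (d :: ds) p).
Proof. destruct (HFZ m) as [_ [H _]]; auto. Qed.

Lemma pdN l m : pd l (nabla G Y Z m) p =
  sum2 (fun i => FY i (l :: nil) p * FZ m (i :: nil) p + FY i nil p * FZ m (l :: i :: nil) p)
  + sum2 (fun i => sum2 (fun j => (FY i (l :: nil) p * FZ j nil p + FY i nil p * FZ j (l :: nil) p) * G i j m)).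
Proof.
  apply (pd_loc U _ (fun q => sum2 (fun i => FY i nil q * FZ m (i :: nil) q)
     + sum2 (fun i => sum2 (fun j => FY i nil q * FZ j nil q * G i j m)))); auto.
  - intros q Hq. unfold nabla, sum2.
    rewrite !(pd_X U Z FZ HU HFZ _ _ q Hq), !(YF _ q Hq), !(ZF _ q Hq). reflexivity.
  - eapply dpl_eq_lim.
    + unfold sum2.
      repeat first [eapply dl_plus | eapply dl_mult | apply dY | apply dZ | apply dl_const].
    + cbv beta. rewrite ?shift0. unfold sum2. ring.
Qed.

Lemma pdB i m : pd i (bracket X Z m) p = sum2 (fun l => X l p * FZ m (i :: l :: nil) p).
Proof.
  apply (pd_loc U _ (fun q => sum2 (fun l => X l p * FZ m (l :: nil) q))); auto.
  - intros q Hq. unfold bracket, sum2.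
    rewrite !(pd_X U Z FZ HU HFZ _ _ q Hq), !(pdXz _ _ q Hq), !(XB _ q Hq), !(ZF _ q Hq). ring.
  - unfold sum2. apply dl_plus; apply dl_scal; apply dZ.
Qed.

Lemma rev_eq k :
  (forall m, FZ m (i1 :: i2 :: nil) p = FZ m (i2 :: i1 :: nil) p) ->
  bracket X (nabla G Y Z) k p - nabla G Y (bracket X Z) k p - nabla G (bracket X Y) Z k p = 0.
Proof.
  intros Hs.
  assert (T1 : bracket X (nabla G Y Z) k p = sum2 (fun l => X l p *
     (sum2 (fun i => FY i (l :: nil) p * FZ k (i :: nil) p + FY i nil p * FZ k (l :: i :: nil) p)
     + sum2 (fun i => sum2 (fun j => (FY i (l :: nil) p * FZ j nil p + FY i nil p * FZ j (l :: nil) p) * G i j k))))).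
  { unfold bracket, sum2. cbv beta. rewrite !pdN, !(pdXz _ _ p Hp). unfold sum2. ring. }
  assert (T2 : nabla G Y (bracket X Z) k p =
     sum2 (fun i => FY i nil p * sum2 (fun l => X l p * FZ k (i :: l :: nil) p))
     + sum2 (fun i => sum2 (fun j => FY i nil p * sum2 (fun l => X l p * FZ j (l :: nil) p) * G i j k))).
  { unfold nabla. unfold sum2 at 1 2 3 4. cbv beta. rewrite !pdB.
    unfold bracket, sum2.
    rewrite !(pd_X U Z FZ HU HFZ _ _ p Hp), !(pdXz _ _ p Hp), !(YF _ p Hp), !(ZF _ p Hp). ring. }
  assert (T3 : nabla G (bracket X Y) Z k p =
     sum2 (fun i => sum2 (fun l => X l p * FY i (l :: nil) p) * FZ k (i :: nil) p)
     + sum2 (fun i => sum2 (fun j => sum2 (fun l => X l p * FY i (l :: nil) p) * FZ j nil p * G i j k))).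
  { unfold nabla, bracket, sum2.
    rewrite !(pd_X U Z FZ HU HFZ _ _ p Hp), !(pd_X U Y FY HU HFY _ _ p Hp), !(pdXz _ _ p Hp),
      !(YF _ p Hp), !(ZF _ p Hp). ring. }
  rewrite T1, T2, T3. unfold sum2. rewrite !Hs. ring.
Qed.
End Rev.

Lemma reverse G U X : is_open U -> smooth_vf U X ->
  (exists b1 b2 : R, forall p, U p -> X i1 p = b1 /\ X i2 p = b2) ->
  affine_killing G U X.
Proof.
  intros HU HX [b1 [b2 Hb]]. split; auto.
  intros Y Z HY HZ k p Hp.
  destruct (smooth_vf_F U Y HY) as [FY HFY].
  destruct (smooth_vf_F U Z HZ) as [FZ HFZ].
  apply (rev_eq G U X Y Z FY FZ p HU HFY HFZ Hp).
  - intros l q Hq. destruct (Hb q Hq), (Hb p Hp). destruct l; congruence.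
  - intros m. destruct (HFZ m) as [_ [H1 H2]]. exact (clairaut U (FZ m) nil p HU Hp H1 H2).
Qed.

Theorem mainTheorem14 (a b c d e f : R) (U : pt -> Prop) :
  ricci_nondegenerate (Gam a b c d e f) ->
  is_open U -> is_connected U ->
  forall X : vf,
    affine_killing (Gam a b c d e f) U X <->
    (smooth_vf U X /\
     exists b1 b2 : R, forall p, U p -> X i1 p = b1 /\ X i2 p = b2).
Proof.
  intros Hnd HU HC X. split.
  - intros [HX HK]. split; auto.
    destruct (smooth_vf_F U X HX) as [FX HF].
    assert (Hd : detp a b c d e f <> 0).
    { pose proof (Hnd (0, 0)) as H. rewrite ricci_det in H. exact H. }
    assert (Z0 : forall q k l, U q -> FX k (l :: nil) q = 0).
    { intros q k l Hq.
      assert (EA : Ap FX q = mkA (FX i1 (i1 :: nil) q) (FX i1 (i2 :: nil) q)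
                                 (FX i2 (i1 :: nil) q) (FX i2 (i2 :: nil) q)).
      { extensionality k'; extensionality l'. destruct k', l'; reflexivity. }
      pose proof (alg a b c d e f (FX i1 (i1 :: nil) q) (FX i1 (i2 :: nil) q)
                                 (FX i2 (i1 :: nil) q) (FX i2 (i2 :: nil) q) Hd) as HA.
      cbv zeta in HA. rewrite <- EA in HA.
      destruct HA as [h1 [h2 [h3 h4]]].
      - intros; apply (Cz0 _ U X FX HU HF HK); auto.
      - intros; apply (CzM _ U X FX HU HF HK); auto.
      - intros; apply (CzM _ U X FX HU HF HK); auto.
      - destruct k, l; auto. }
    assert (DX : forall k q dd, U q -> derivable_pt_lim (fun t => X k (shift q dd t)) 0 0).
    { intros k q dd Hq. destruct (open_shift U q dd HU Hq) as [r [Hr Hs]].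
      destruct (HF k) as [H0 [H1 _]].
      apply (dpl_loc _ (fun t => FX k nil (shift q dd t)) _ _ r Hr).
      - intros t Ht. rewrite Rminus_0_r in Ht. symmetry. apply H0, Hs; auto.
      - eapply dpl_eq_lim; [apply H1; auto | apply Z0; auto]. }
    destruct (const_conn U (X i1) HU HC (fun q dd Hq => DX i1 q dd Hq)) as [c1 Hc1].
    destruct (const_conn U (X i2) HU HC (fun q dd Hq => DX i2 q dd Hq)) as [c2 Hc2].
    exists c1, c2. intros p Hp; auto.
  - intros [HX Hb]. apply reverse; auto.
Qed.
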